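(* Let $G$ be a finite non-abelian group admitting a GRR. Then $G$ admits a $2$-GRR.
   Context: A group $G$ admits a GRR if there is a Cayley graph $\mathrm{Cay}(G,R)$ (vertex set $G$, edges $\{g,rg\}$, $R=R^{-1}$, $1\notin R$) whose automorphism group is isomorphic to $G$. An $m$-GRR for $G$ is a finite regular simple graph admitting a semiregular group of automorphisms isomorphic to $G$ with exactly $m$ orbits on vertices and whose full automorphism group is isomorphic to $G$. *)

(* Defs.v *)
From HB Require Import structures.
From mathcomp Require Import all_boot all_order all_fingroup.
Set Implicit Arguments. Unset Strict Implicit. Unset Printing Implicit Defensive.
Local Open Scope group_scope.

Definition simple_graph (V : finType) (e : rel V) : Prop :=
  symmetric e /\ irreflexive e.

Definition regular_graph (V : finType) (e : rel V) : Prop :=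
  exists k : nat, forall x : V, #|[set y | e x y]| = k.

Definition graph_aut (V : finType) (e : rel V) : {set {perm V}} :=
  [set p : {perm V} | [forall x, forall y, e (p x) (p y) == e x y]].

Lemma graph_aut_group_set (V : finType) (e : rel V) : group_set (graph_aut e).
Proof.
apply/group_setP; split.
  by rewrite inE; apply/forallP=> x; apply/forallP=> y; rewrite !perm1.
move=> p q; rewrite !inE => /forallP Hp /forallP Hq.
apply/forallP=> x; apply/forallP=> y; rewrite !permM.
by rewrite (eqP (forallP (Hq (p x)) (p y))) (eqP (forallP (Hp x) y)).
Qed.

Canonical graph_aut_group (V : finType) (e : rel V) :=
  Group (graph_aut_group_set e).

Definition cayley_rel (gT : finGroupType) (R : {set gT}) : rel gT :=
  fun g h => h * g^-1 \in R.

Definition has_GRR (gT : finGroupType) : Prop :=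
  exists R : {set gT},
    [/\ R^-1 = R, 1 \notin R &
        graph_aut (cayley_rel R) \isog [set: gT]].

Definition semiregular_perm (V : finType) (H : {set {perm V}}) : Prop :=
  forall (h : {perm V}) (x : V), h \in H -> h x = x -> h = 1.

Definition has_mGRR (gT : finGroupType) (m : nat) : Prop :=
  exists (V : finType) (e : rel V),
    [/\ simple_graph e, regular_graph e,
        exists H : {group {perm V}},
          [/\ H \subset graph_aut e, H \isog [set: gT], semiregular_perm H &
              #|[set orbit 'P H x | x : V]| = m]
      & graph_aut e \isog [set: gT]].

(* Main.v *)
Require Import Defs.
From HB Require Import structures.
From mathcomp Require Import all_boot all_order all_fingroup.
From mathcomp Require Import zify.
Set Implicit Arguments. Unset Strict Implicit. Unset Printing Implicit Defensive.
Local Open Scope group_scope.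

Section Gen.
Variable V : finType.
Variable e : rel V.

Definition gdeg (v : V) := \sum_(w : V) (e v w : nat).
Definition gtri (v : V) := \sum_(p : V) \sum_(q : V) ([&& e v p, e v q & e p q] : nat).

Lemma aut_e p u v : p \in graph_aut e -> e (p u) (p v) = e u v.
Proof. by rewrite inE => /forallP H; apply/eqP; exact: (forallP (H u) v). Qed.

Lemma gdeg_aut p v : p \in graph_aut e -> gdeg (p v) = gdeg v.
Proof.
move=> Hp; rewrite /gdeg (reindex_inj (@perm_inj _ p)) /=.
by apply: eq_bigr => w _; rewrite aut_e.
Qed.

Lemma gtri_aut p v : p \in graph_aut e -> gtri (p v) = gtri v.
Proof.
move=> Hp; rewrite /gtri (reindex_inj (@perm_inj _ p)) /=.
apply: eq_bigr => w _; rewrite (reindex_inj (@perm_inj _ p)) /=.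
by apply: eq_bigr => z _; rewrite !aut_e.
Qed.

Lemma card_gdeg v : #|[set w | e v w]| = gdeg v.
Proof. by rewrite -sum1_card /gdeg big_mkcond; apply: eq_bigr => w _; rewrite inE; case: (e v w). Qed.
End Gen.

Section Reg.
Variable gT : finGroupType.
Definition rho (c : gT) : {perm gT} := perm (mulIg c).
Lemma rhoE c g : rho c g = g * c. Proof. by rewrite permE. Qed.

Lemma rho_aut (A : {set gT}) c : rho c \in graph_aut (cayley_rel A).
Proof.
rewrite inE; apply/forallP => g; apply/forallP => h.
by rewrite !rhoE /cayley_rel invMg mulgA mulgK.
Qed.

Lemma rho_inj : injective rho.
Proof. by move=> c d E; have := congr1 (fun p : {perm gT} => p 1) E; rewrite !rhoE !mul1g. Qed.

Lemma grr_rho (A : {set gT}) (p : {perm gT}) :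
  graph_aut (cayley_rel A) \isog [set: gT] -> p \in graph_aut (cayley_rel A) ->
  exists c, forall g, p g = g * c.
Proof.
move=> Hiso Hp.
have Hsub : rho @: [set: gT] \subset graph_aut (cayley_rel A).
  by apply/subsetP => q /imsetP [c _ ->]; exact: rho_aut.
have Heq : rho @: [set: gT] = graph_aut (cayley_rel A).
  apply/eqP; rewrite eqEcard Hsub /= card_imset; last exact: rho_inj.
  by rewrite (card_isog Hiso).
move: Hp; rewrite -Heq => /imsetP [c _ ->]; exists c => g; exact: rhoE.
Qed.

Lemma grr_witness (A : {set gT}) :
  ~~ abelian [set: gT] -> A^-1 = A -> graph_aut (cayley_rel A) \isog [set: gT] ->
  exists x, exists a, x \in A /\ a * x * a^-1 \notin A.
Proof.
move=> Hnab HAi Hiso.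
case: (boolP [exists x, exists a, (x \in A) && (a * x * a^-1 \notin A)]).
  by case/existsP=> x /existsP [a /andP [H1 H2]]; exists x, a.
rewrite negb_exists => /forallP H.
have Hc : forall x a, x \in A -> a * x * a^-1 \in A.
  move=> x a Hx; move: (H x); rewrite negb_exists => /forallP /(_ a).
  by rewrite negb_and Hx /= negbK.
case/negP: Hnab; rewrite abelianE; apply/centsP => a _ g _.
have inj_s : injective (fun g : gT => a * g * a^-1).
  by move=> u v /mulIg /mulgI.
pose s := perm inj_s.
have Hs : s \in graph_aut (cayley_rel A).
  rewrite inE; apply/forallP => u; apply/forallP => v; rewrite !permE /cayley_rel.
  have -> : a * v * a^-1 * (a * u * a^-1)^-1 = a * (v * u^-1) * a^-1.
    by rewrite !invMg invgK !mulgA mulgKV.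
  apply/eqP; apply/idP/idP => [Hm|]; last exact: Hc.
  have := Hc _ a^-1 Hm; by rewrite invgK !mulgA mulVg mul1g mulgKV.
have [c Hcg] := grr_rho Hiso Hs.
have c1 : c = 1 by have := Hcg 1; rewrite permE mul1g mulg1 mulgV.
have := Hcg g; rewrite permE c1 mulg1 => E.
by rewrite /commute -{2}E mulgKV.
Qed.
End Reg.
Section Sums.
Variables (gT : finGroupType) (A S : {set gT}).

Lemma K1 (h : gT) : \sum_(g : gT) nat_of_bool ((g \in A) && ((h * g^-1)%g \in S))
           = \sum_(s in S) nat_of_bool ((s^-1 * h)%g \in A).
Proof.
have Hi : injective (fun s : gT => s^-1 * h) by move=> u v /mulIg /invg_inj.
rewrite (reindex_inj Hi) [RHS]big_mkcond; apply: eq_bigr => s _ /=.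
rewrite invMg invgK mulKVg.
by case: (s \in S); case: (_ \in A).
Qed.

Lemma K2 (u : gT) : \sum_(h : gT) nat_of_bool ((h \in A) && ((h * u)%g \in S))
           = \sum_(t in S) nat_of_bool ((t * u^-1)%g \in A).
Proof.
have Hi : injective (fun t : gT => t * u^-1) by move=> p q /mulIg.
rewrite (reindex_inj Hi) [RHS]big_mkcond; apply: eq_bigr => t _ /=.
rewrite mulgKV.
by case: (t \in S); case: (_ \in A).
Qed.

Lemma sumV (F : gT -> nat) : \sum_(g : gT) (nat_of_bool (g^-1%g \in S) * F g)%N = \sum_(u in S) F u^-1%g.
Proof.
rewrite (reindex_inj invg_inj) [RHS]big_mkcond; apply: eq_bigr => u _ /=.
by rewrite invgK; case: (u \in S); rewrite ?mul1n ?mul0n.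
Qed.

Lemma sumM (F : gT -> nat) : \sum_(g : gT) (nat_of_bool (g \in S) * F g)%N = \sum_(u in S) F u.
Proof.
by rewrite [RHS]big_mkcond; apply: eq_bigr => u _ /=; case: (u \in S); rewrite ?mul1n ?mul0n.
Qed.
End Sums.

Section Constr.
Variables (gT : finGroupType) (A : {set gT}) (a x : gT).
Hypotheses (HAi : A^-1 = A) (HA1 : 1 \notin A) (Hx : x \in A) (Hax : a * x * a^-1 \notin A)
  (Hiso : graph_aut (cayley_rel A) \isog [set: gT]).

Definition SS : {set gT} := 1 |: (a |: [set a * x]).
Definition Vt : finType := (gT + gT)%type.
Definition ed (u v : Vt) : bool :=
  match u, v with
  | inl g, inl h => h * g^-1 \in A
  | inr g, inr h => h * g^-1 \in A
  | inl g, inr h => h * g^-1 \in SS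
  | inr h, inl g => h * g^-1 \in SS
  end.

Lemma memAV g : (g^-1 \in A) = (g \in A).
Proof. by rewrite -{2}HAi inE. Qed.

Lemma a_neq1 : a != 1.
Proof. by apply/eqP => E; move: Hax; rewrite E mul1g invg1 mulg1 Hx. Qed.

Lemma ax_neq1 : a * x != 1.
Proof.
apply/eqP => E; move: Hax; have -> : a = x^-1 by rewrite -(mulgK x a) E mul1g.
by rewrite invgK mulVg mul1g Hx.
Qed.

Lemma a_neq_ax : a != a * x.
Proof. apply/eqP => /(congr1 (mulg a^-1)); rewrite mulVg mulKg => E; by move: HA1; rewrite E Hx. Qed.

Lemma sumSS (F : gT -> nat) : \sum_(g in SS) F g = F 1 + F a + F (a * x).
Proof.
rewrite /SS big_setU1 /=; last by rewrite !inE negb_or eq_sym a_neq1 eq_sym ax_neq1.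
rewrite big_setU1 /=; last by rewrite inE a_neq_ax.
by rewrite big_set1 addnA.
Qed.


Definition PL := \sum_(u in SS) \sum_(v in SS) nat_of_bool ((v^-1 * u)%g \in A).
Definition PR := \sum_(u in SS) \sum_(v in SS) nat_of_bool ((v * u^-1)%g \in A).
Definition OO := \sum_(g : gT) \sum_(h : gT) nat_of_bool [&& g \in A, h \in A & (h * g^-1)%g \in A].


Lemma L_LL : \sum_(g : gT) \sum_(h : gT)
  nat_of_bool [&& (g * 1^-1)%g \in A, (h * 1^-1)%g \in A & (h * g^-1)%g \in A] = OO.
Proof. by apply: eq_bigr => g _; apply: eq_bigr => h _; rewrite invg1 !mulg1. Qed.

Lemma L_RRr : \sum_(g : gT) \sum_(h : gT)
  nat_of_bool [&& (g * 1^-1)%g \in SS, (h * 1^-1)%g \in SS & (h * g^-1)%g \in A] = PR.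
Proof.
rewrite /PR -sumM; apply: eq_bigr => g _; rewrite -sumM big_distrr; apply: eq_bigr => h _ /=.
by rewrite invg1 !mulg1; case: (g \in SS); case: (h \in SS); rewrite /= ?mul1n ?mul0n.
Qed.

Lemma L_LR : \sum_(g : gT) \sum_(h : gT)
  nat_of_bool [&& (g * 1^-1)%g \in A, (h * 1^-1)%g \in SS & (h * g^-1)%g \in SS] = PL.
Proof.
transitivity (\sum_(h : gT) (nat_of_bool (h \in SS) *
   \sum_(g : gT) nat_of_bool ((g \in A) && ((h * g^-1)%g \in SS)))%N).
  rewrite exchange_big; apply: eq_bigr => h _; rewrite big_distrr; apply: eq_bigr => g _ /=.
  by rewrite invg1 !mulg1; case: (h \in SS); case: (g \in A); rewrite /= ?mul1n ?mul0n.
rewrite sumM /PL; apply: eq_bigr => h _; exact: K1.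
Qed.

Lemma L_RL : \sum_(g : gT) \sum_(h : gT)
  nat_of_bool [&& (g * 1^-1)%g \in SS, (h * 1^-1)%g \in A & (g * h^-1)%g \in SS] = PL.
Proof.
transitivity (\sum_(g : gT) (nat_of_bool (g \in SS) *
   \sum_(h : gT) nat_of_bool ((h \in A) && ((g * h^-1)%g \in SS)))%N).
  apply: eq_bigr => g _; rewrite big_distrr; apply: eq_bigr => h _ /=.
  by rewrite invg1 !mulg1; case: (g \in SS); case: (h \in A); rewrite /= ?mul1n ?mul0n.
rewrite sumM /PL; apply: eq_bigr => h _; exact: K1.
Qed.

Lemma tri_l : gtri ed (inl 1) = OO + PL + PL + PR.
Proof.
rewrite /gtri big_sumType /=.
under eq_bigr => g _ do rewrite big_sumType /=.
under [X in _ + X]eq_bigr => g _ do rewrite big_sumType /=.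
rewrite !big_split /= L_LL L_LR L_RL L_RRr.
by rewrite !addnA.
Qed.


Lemma M_LL : \sum_(g : gT) \sum_(h : gT)
  nat_of_bool [&& (1 * g^-1)%g \in SS, (1 * h^-1)%g \in SS & (h * g^-1)%g \in A] = PL.
Proof.
transitivity (\sum_(g : gT) (nat_of_bool (g^-1 \in SS) *
   \sum_(h : gT) (nat_of_bool (h^-1 \in SS) * nat_of_bool ((h * g^-1)%g \in A)))%N).
  apply: eq_bigr => g _; rewrite big_distrr; apply: eq_bigr => h _ /=.
  by rewrite !mul1g; case: (g^-1 \in SS); case: (h^-1 \in SS); rewrite /= ?mul1n ?mul0n.
rewrite sumV /PL; apply: eq_bigr => u _; rewrite sumV; apply: eq_bigr => v _.
by rewrite invgK.
Qed.

Lemma M_LR : \sum_(g : gT) \sum_(h : gT)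
  nat_of_bool [&& (1 * g^-1)%g \in SS, (h * 1^-1)%g \in A & (h * g^-1)%g \in SS] = PR.
Proof.
transitivity (\sum_(g : gT) (nat_of_bool (g^-1 \in SS) *
   \sum_(h : gT) nat_of_bool ((h \in A) && ((h * g^-1)%g \in SS)))%N).
  apply: eq_bigr => g _; rewrite big_distrr; apply: eq_bigr => h _ /=.
  by rewrite mul1g invg1 mulg1; case: (g^-1 \in SS); case: (h \in A); rewrite /= ?mul1n ?mul0n.
rewrite sumV /PR; apply: eq_bigr => u _; rewrite invgK; exact: K2.
Qed.

Lemma M_RL : \sum_(g : gT) \sum_(h : gT)
  nat_of_bool [&& (g * 1^-1)%g \in A, (1 * h^-1)%g \in SS & (g * h^-1)%g \in SS] = PR.
Proof.
transitivity (\sum_(h : gT) (nat_of_bool (h^-1 \in SS) *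
   \sum_(g : gT) nat_of_bool ((g \in A) && ((g * h^-1)%g \in SS)))%N).
  rewrite exchange_big; apply: eq_bigr => h _; rewrite big_distrr; apply: eq_bigr => g _ /=.
  by rewrite mul1g invg1 mulg1; case: (h^-1 \in SS); case: (g \in A); rewrite /= ?mul1n ?mul0n.
rewrite sumV /PR; apply: eq_bigr => u _; rewrite invgK; exact: K2.
Qed.

Lemma tri_r : gtri ed (inr 1) = PL + PR + PR + OO.
Proof.
rewrite /gtri big_sumType /=.
under eq_bigr => g _ do rewrite big_sumType /=.
under [X in _ + X]eq_bigr => g _ do rewrite big_sumType /=.
rewrite !big_split /= M_LL M_LR M_RL L_LL.
by rewrite !addnA.
Qed.

Lemma PL_PR : PL = PR + 2.
Proof.
rewrite /PL /PR !sumSS !invg1 !mulg1 !mul1g !mulVg !mulgV mulKg.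
have E1 : ((a * x)^-1 * a \in A) = true by rewrite invMg mulgKV memAV.
have E2 : (a * (a * x)^-1 \in A) = false.
  by apply/negbTE; rewrite -memAV invMg invgK.
have E3 : (a^-1 \in A) = (a \in A) by rewrite memAV.
have E4 : ((a * x)^-1 \in A) = (a * x \in A) by rewrite memAV.
rewrite E1 E2 E3 E4 (negbTE HA1) (negbTE Hax) Hx.
by case: (a \in A); case: (a * x \in A).
Qed.

Lemma tri_neq : gtri ed (inl 1) != gtri ed (inr 1).
Proof. by rewrite tri_l tri_r PL_PR; apply/eqP; lia. Qed.

Definition rmf (c : gT) (v : Vt) : Vt :=
  match v with inl g => inl (g * c) | inr h => inr (h * c) end.
Lemma rmf_inj c : injective (rmf c).
Proof. by move=> [g|g] [h|h] //= [] /mulIg ->. Qed.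
Definition rm c : {perm Vt} := perm (@rmf_inj c).
Lemma rmE c v : rm c v = rmf c v. Proof. by rewrite permE. Qed.

Lemma rm_aut c : rm c \in graph_aut ed.
Proof.
rewrite inE; apply/forallP => -[g|g]; apply/forallP => -[h|h];
  by rewrite !rmE /= invMg mulgA mulgK.
Qed.

Lemma rmM : {morph rm : c d / c * d}.
Proof. by move=> c d; apply/permP => v; rewrite permM !rmE; case: v => g /=; rewrite mulgA. Qed.

Definition rm_morph : {morphism [set: gT] >-> {perm Vt}} := Morphism (in2W rmM).

Definition HH := (rm_morph @* [set: gT])%G.

Lemma rm_injm : 'injm rm_morph.
Proof.
apply/injmP => c d _ _ E; have := congr1 (fun p : {perm Vt} => p (inl 1)) E.
by rewrite /= !rmE /= !mul1g => -[].
Qed.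

Lemma HH_iso : HH \isog [set: gT].
Proof. by rewrite isog_sym; apply: sub_isog => //; exact: rm_injm. Qed.

Lemma memHH p : p \in HH -> exists c, p = rm c.
Proof. by case/morphimP => c _ _ ->; exists c. Qed.

Lemma rm_in c : rm c \in HH.
Proof. by apply: (mem_morphim rm_morph) => //; rewrite inE. Qed.

Lemma inl_rm g : inl g = rm g (inl 1) :> Vt.
Proof. by rewrite rmE /= mul1g. Qed.
Lemma inr_rm g : inr g = rm g (inr 1) :> Vt.
Proof. by rewrite rmE /= mul1g. Qed.

Lemma tri_inl g : gtri ed (inl g) = gtri ed (inl 1).
Proof. by rewrite inl_rm gtri_aut // rm_aut. Qed.
Lemma tri_inr g : gtri ed (inr g) = gtri ed (inr 1).
Proof. by rewrite inr_rm gtri_aut // rm_aut. Qed.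

Lemma cancel_r (u w : gT) : u * w = w -> u = 1.
Proof. by move/(congr1 (mulg^~ w^-1)); rewrite /= mulgK mulgV. Qed.
Lemma cancel_l (u w : gT) : w * u = w -> u = 1.
Proof. by move/(congr1 (mulg w^-1)); rewrite mulKg mulVg. Qed.

Lemma SS_stab d : (forall s, s \in SS -> s * d \in SS) -> d = 1.
Proof.
move=> Hd.
have mS : forall s, s \in SS = [|| s == 1, s == a | s == a * x].
  by move=> s; rewrite !inE.
have x1 : x != 1 by apply/eqP => E; move: HA1; rewrite -E Hx.
have na1 := a_neq1; have nax1 := ax_neq1.
have Hxa : x = a -> False by move=> Ex; move: Hax; rewrite -Ex mulgK Hx.
have := Hd 1; rewrite mul1g !mS eqxx => /(_ isT) /or3P [/eqP //|/eqP Ed|/eqP Ed].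
- have := Hd a; rewrite !mS eqxx orbT Ed => /(_ isT) /or3P [/eqP Eaa|/eqP E|/eqP E].
  + have := Hd (a * x); rewrite !mS eqxx !orbT Ed => /(_ isT) /or3P [/eqP E|/eqP E|/eqP E].
    * by move: E; rewrite -Eaa => /mulIg /cancel_l E; rewrite E eqxx in x1.
    * by move/cancel_r: E => E; rewrite E eqxx in nax1.
    * by move/cancel_l: E => E; rewrite E eqxx in na1.
  + by move/cancel_l: E => E; rewrite E eqxx in na1.
  + by move/mulgI: E => E; exfalso; apply: Hxa; rewrite E.
- have := Hd a; rewrite !mS eqxx orbT Ed => /(_ isT) /or3P [/eqP Eaa|/eqP E|/eqP E].
  + have := Hd (a * x); rewrite !mS eqxx !orbT Ed => /(_ isT) /or3P [/eqP E|/eqP E|/eqP E].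
    * by move: E; rewrite -Eaa => /mulIg /cancel_l E; rewrite E eqxx in x1.
    * have Eax : a * x = a^-1 by rewrite -(mulKg a (a * x)) Eaa mulg1.
      exfalso; apply: Hxa; rewrite -(mulKg a x) Eax; rewrite Eax in E; exact: E.
    * by move/cancel_l: E => E; rewrite E eqxx in nax1.
  + by move/cancel_l: E => E; rewrite E eqxx in nax1.
  + by move/cancel_r: E => E; rewrite E eqxx in na1.
Qed.

Lemma aut_side p : p \in graph_aut ed ->
  (forall g, exists g', p (inl g) = inl g') /\ (forall g, exists g', p (inr g) = inr g').
Proof.
move=> Hp; have Hn := tri_neq.
split=> g; case E: (p _) => [g'|g']; try by exists g'.
- have := gtri_aut (inl g) Hp; rewrite E tri_inl tri_inr => Ee.
  by rewrite Ee eqxx in Hn.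
- have := gtri_aut (inr g) Hp; rewrite E tri_inl tri_inr => Ee.
  by rewrite Ee eqxx in Hn.
Qed.

Lemma aut_in_HH p : p \in graph_aut ed -> p \in HH.
Proof.
move=> Hp; have [Pl Pr] := aut_side Hp.
pose al g := if p (inl g) is inl g' then g' else g.
pose be g := if p (inr g) is inr g' then g' else g.
have Hal : forall g, p (inl g) = inl (al g).
  by move=> g; rewrite /al; have [g' ->] := Pl g.
have Hbe : forall g, p (inr g) = inr (be g).
  by move=> g; rewrite /be; have [g' ->] := Pr g.
have al_inj : injective al.
  by move=> u v E; apply: (@inl_inj _ gT); apply: (@perm_inj _ p); rewrite !Hal E.
have be_inj : injective be.
  by move=> u v E; apply: (@inr_inj gT _); apply: (@perm_inj _ p); rewrite !Hbe E.
have Hala : perm al_inj \in graph_aut (cayley_rel A).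
  rewrite inE; apply/forallP => u; apply/forallP => v; rewrite !permE /cayley_rel.
  by have := aut_e (inl u) (inl v) Hp; rewrite !Hal /= => ->.
have Hbea : perm be_inj \in graph_aut (cayley_rel A).
  rewrite inE; apply/forallP => u; apply/forallP => v; rewrite !permE /cayley_rel.
  by have := aut_e (inr u) (inr v) Hp; rewrite !Hbe /= => ->.
have [c Hc0] := grr_rho Hiso Hala.
have [c' Hc0'] := grr_rho Hiso Hbea.
have Hc : forall g, al g = g * c by move=> g; rewrite -Hc0 permE.
have Hc' : forall g, be g = g * c' by move=> g; rewrite -Hc0' permE.
have Hd : forall s, s \in SS -> s * (c' * c^-1) \in SS.
  move=> s Hs; have := aut_e (inl 1) (inr s) Hp; rewrite Hal Hbe /= Hc Hc' mul1g.
  by rewrite invg1 mulg1 Hs mulgA.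
have Ecc : c' = c.
  by have := SS_stab Hd => /(congr1 (mulg^~ c)); rewrite /= mulgKV mul1g.
have -> : p = rm c.
  by apply/permP => -[g|g]; rewrite rmE /= ?Hal ?Hbe ?Hc ?Hc' ?Ecc.
exact: rm_in.
Qed.

Lemma aut_eq : graph_aut ed = HH.
Proof.
apply/eqP; rewrite eqEsubset; apply/andP; split; apply/subsetP => p.
  exact: aut_in_HH.
by case/memHH => c ->; exact: rm_aut.
Qed.

Lemma ed_simple : simple_graph ed.
Proof.
split.
  move=> [g|g] [h|h] //=; by rewrite -memAV invMg invgK.
by move=> [g|g] /=; rewrite mulgV (negbTE HA1).
Qed.

Lemma deg_lr : gdeg ed (inl 1) = gdeg ed (inr 1).
Proof.
rewrite /gdeg !big_sumType /= addnC; congr (_ + _).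
  rewrite (reindex_inj invg_inj); apply: eq_bigr => g _ /=.
  by rewrite invg1 mulg1 mul1g.
Qed.

Lemma ed_regular : regular_graph ed.
Proof.
exists (gdeg ed (inl 1)) => v; rewrite card_gdeg.
case: v => g; first by rewrite inl_rm gdeg_aut // rm_aut.
by rewrite inr_rm gdeg_aut ?rm_aut // deg_lr.
Qed.

Lemma HH_semireg : semiregular_perm HH.
Proof.
move=> h v /memHH [c ->]; rewrite rmE; case: v => g /= [] /(cancel_l) ->;
  by apply/permP => w; rewrite rmE perm1; case: w => w /=; rewrite mulg1.
Qed.

Lemma HH_orbits : #|[set orbit 'P HH v | v : Vt]| = 2.
Proof.
have Ol : forall g, orbit 'P HH (inl g) = orbit 'P HH (inl 1).
  move=> g; apply/orbit_eqP; apply/orbitP; exists (rm g); first exact: rm_in.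
  by rewrite /= apermE -inl_rm.
have Or : forall g, orbit 'P HH (inr g) = orbit 'P HH (inr 1).
  move=> g; apply/orbit_eqP; apply/orbitP; exists (rm g); first exact: rm_in.
  by rewrite /= apermE -inr_rm.
have -> : [set orbit 'P HH v | v : Vt] = [set orbit 'P HH (inl 1); orbit 'P HH (inr 1)].
  apply/setP => X; rewrite !inE; apply/imsetP/orP.
    by case=> -[g|g] _ ->; [left; rewrite Ol | right; rewrite Or].
  by case=> /eqP ->; [exists (inl 1) | exists (inr 1)].
rewrite cards2; suff -> : orbit 'P HH (inl 1) != orbit 'P HH (inr 1) by [].
apply/eqP => E.
have : inr 1 \in orbit 'P HH (inl 1) by rewrite E orbit_refl.
by case/orbitP => h /memHH [c ->]; rewrite /= apermE rmE.
Qed.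

Lemma constr_mGRR : has_mGRR gT 2.
Proof.
exists Vt, ed; split.
- exact: ed_simple.
- exact: ed_regular.
- exists HH; split.
  + by rewrite aut_eq.
  + exact: HH_iso.
  + exact: HH_semireg.
  + exact: HH_orbits.
- by rewrite aut_eq; exact: HH_iso.
Qed.

End Constr.

Theorem lemma3p8 (gT : finGroupType) :
  ~~ abelian [set: gT] -> has_GRR gT -> has_mGRR gT 2.
Proof.
move=> Hnab [R [HRi HR1 Hiso]].
have [x [a [Hx Hax]]] := grr_witness Hnab HRi Hiso.
exact: (constr_mGRR HRi HR1 Hx Hax Hiso).
Qed.
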